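(* Let $\widehat\delta$ be the nearest representable approximation of the minimum increment angle in the positional encoding, let $C_1,C_2$ be column indices of source positional embeddings and $D_1,D_2$ column indices of target positional embeddings in $X\in\mathbb{R}^{K\times d}$. Then there exists a single transformer layer that simulates the increment operation $X[1,D_1]\leftarrow\sin(\arcsin(X[1,C_1])+\widehat\delta)$, $X[1,D_2]\leftarrow\cos(\arccos(X[1,C_2])+\widehat\delta)$.
   Context: Conventions: rows/columns indexed from $1$; $X[i,j]$ is the $(i,j)$ entry. $\phi(x)=\max\{x,0\}$ entrywise. Hardmax $\sigma$: row $i$ of $\sigma(\Phi)$ is $\frac{1}{|S_i|}\sum_{k\in S_i}e_k$, $S_i=\{k:\Phi_{ik}=\max_j\Phi_{ij}\}$. Positional encoding: $R_{\widehat\delta}=\begin{bmatrix}\cos\widehat\delta&-\sin\widehat\delta\\ \sin\widehat\delta&\cos\widehat\delta\end{bmatrix}$, $p_0=(0,1)^\top$, $p_i=R_{\widehat\delta}^\top p_{i-1}$, position $i$ encoded by $(p_i^{(1)},p_i^{(2)})$. For a weighted hypergraph with incident matrix $A\in\mathbb{R}^{n_v\times n_e}$ ($A_{ij}=w(e_j)$ if vertex $v_i\in e_j$, else $0$) and $K\ge\max\{n_v,n_e\}+1$, the padded incident matrix $\widetilde A\in\mathbb{R}^{K\times K}$ has $\widetilde A_{i+1,j+1}=A_{ij}$, zeros elsewhere. A transformer layer on $X\in\mathbb{R}^{K\times d}$ is $f(X,\widetilde A)=f_{\mathrm{mlp}}(f_{\mathrm{attn}}(X,\widetilde A))$, $f_{\mathrm{attn}}(X,\widetilde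 A)=\sum_{i\in M_A}\psi^{(i)}(X,\widetilde A)+\sum_{i\in M_{A^\top}}\psi^{(i)}(X,\widetilde A^\top)+\sum_{i\in M}\psi^{(i)}(X,I_K)+X$, $\psi(X,B)=B\,\sigma(XW_QW_K^\top X^\top)XW_V$ ($W_Q,W_K\in\mathbb{R}^{d\times2}$, $W_V\in\mathbb{R}^{d\times d}$), $f_{\mathrm{mlp}}(X)=Z^{(4)}W^{(4)}+X$, $Z^{(1)}=X$, $Z^{(j+1)}=\phi(Z^{(j)}W^{(j)})$ ($j=1,2,3$). Storage convention: scalars in the top row of a column (rest $0$), arrays of length $K-1$ in rows $2,\dots,K$; designated columns $B_{\mathrm{global}}$ (top $1$, rest $0$), $B_{\mathrm{local}}$ (top $0$, rest $1$), and scratchpad columns. ''Simulating an operation'' means the layer's weights can be chosen so that applying it to $X$ performs the stated update. *)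

(* Defs.v *)
From HB Require Import structures.
From mathcomp Require Import all_boot all_order all_algebra.
From mathcomp Require Import reals trigo.
Set Implicit Arguments. Unset Strict Implicit. Unset Printing Implicit Defensive.
Import Order.TTheory GRing.Theory Num.Theory.
Local Open Scope ring_scope.

Section Transformer.
Variable R : realType.

Definition argmax_set (K : nat) (Phi : 'M[R]_K) (i : 'I_K) : {set 'I_K} :=
  [set k | [forall j, Phi i j <= Phi i k]].

Definition hardmax (K : nat) (Phi : 'M[R]_K) : 'M[R]_K :=
  \matrix_(i, k) (if k \in argmax_set Phi i then (#|argmax_set Phi i|%:R)^-1 else 0).

Definition relu_mx (m n : nat) (X : 'M[R]_(m, n)) : 'M[R]_(m, n) :=
  map_mx (fun x => Num.max x 0) X.

Record head (d : nat) := Head {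
  WQ : 'M[R]_(d, 2);
  WK : 'M[R]_(d, 2);
  WV : 'M[R]_(d, d) }.

Definition psi (K d : nat) (h : head d) (X : 'M[R]_(K, d)) (B : 'M[R]_K) : 'M[R]_(K, d) :=
  B *m hardmax (X *m WQ h *m (WK h)^T *m X^T) *m X *m WV h.

Record mlp (d : nat) := Mlp {
  h1 : nat; h2 : nat; h3 : nat;
  W1 : 'M[R]_(d, h1);
  W2 : 'M[R]_(h1, h2);
  W3 : 'M[R]_(h2, h3);
  W4 : 'M[R]_(h3, d) }.

Definition f_mlp (K d : nat) (m : mlp d) (X : 'M[R]_(K, d)) : 'M[R]_(K, d) :=
  relu_mx (relu_mx (relu_mx (X *m W1 m) *m W2 m) *m W3 m) *m W4 m + X.

Record layer (d : nat) := Layer {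
  heads_A : seq (head d);
  heads_AT : seq (head d);
  heads_I : seq (head d);
  mlp_of : mlp d }.

Definition f_attn (K d : nat) (L : layer d) (X : 'M[R]_(K, d)) (A : 'M[R]_K) : 'M[R]_(K, d) :=
  \sum_(h <- heads_A L) psi h X A
  + \sum_(h <- heads_AT L) psi h X A^T
  + \sum_(h <- heads_I L) psi h X 1%:M
  + X.

Definition apply_layer (K d : nat) (L : layer d) (X : 'M[R]_(K, d)) (A : 'M[R]_K) : 'M[R]_(K, d) :=
  f_mlp (mlp_of L) (f_attn L X A).

(* storage conventions; r1 is the first row *)
Definition scalar_col (K d : nat) (r1 : 'I_K) (X : 'M[R]_(K, d)) (c : 'I_d) : Prop :=
  forall i : 'I_K, i != r1 -> X i c = 0.

Definition global_col (K d : nat) (r1 : 'I_K) (X : 'M[R]_(K, d)) (c : 'I_d) : Prop :=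
  X r1 c = 1 /\ forall i : 'I_K, i != r1 -> X i c = 0.

Definition local_col (K d : nat) (r1 : 'I_K) (X : 'M[R]_(K, d)) (c : 'I_d) : Prop :=
  X r1 c = 0 /\ forall i : 'I_K, i != r1 -> X i c = 1.

End Transformer.

(* Main.v *)
Require Import Defs.
From HB Require Import structures.
From mathcomp Require Import all_boot all_order all_algebra.
From mathcomp Require Import reals trigo.
Import Order.TTheory GRing.Theory Num.Theory.
Local Open Scope ring_scope.

Section H.
Variable R : realType.
Variable d : nat.

Definition linmlp (W : 'M[R]_d) : mlp R d :=
  @Mlp R d (d + d) (d + d) (d + d) (row_mx W (- W)) 1%:M 1%:M (col_mx 1%:M (- 1%:M)).

Lemma maxsub (x : R) : Num.max x 0 - Num.max (- x) 0 = x.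
Proof.
case: (lerP 0 x) => h.
  have -> : Num.max (-x) 0 = 0 by apply: max_r; rewrite oppr_le0.
  by rewrite subr0.
have -> : Num.max (-x) 0 = -x by apply: max_l; rewrite oppr_ge0 ltW.
by rewrite sub0r opprK.
Qed.

Lemma relu_idem K n (M : 'M[R]_(K, n)) : relu_mx (relu_mx M) = relu_mx M.
Proof.
apply/matrixP => i j; rewrite !mxE.
apply: max_l; rewrite le_max lexx orbT //.
Qed.

Lemma linmlpE K (W : 'M[R]_d) (X : 'M[R]_(K, d)) :
  f_mlp (linmlp W) X = X *m W + X.
Proof.
rewrite /f_mlp /= !mulmx1 !relu_idem mul_mx_row /relu_mx map_row_mx mul_row_col.
congr (_ + _). rewrite !mulmx1. rewrite (mulmxN X W) mulmxN mulmx1.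
apply/matrixP => i j; rewrite !mxE; exact: maxsub.
Qed.

Lemma mul_delta K (X : 'M[R]_(K, d)) (k j j' : 'I_d) (i : 'I_K) :
  (X *m delta_mx k j) i j' = if j' == j then X i k else 0.
Proof.
rewrite mxE (bigD1 k) //= big1 => [|l /negbTE hl]; rewrite !mxE ?hl ?eqxx //=.
by case: eqP => _; rewrite ?mulr1 ?mulr0 addr0.
by rewrite mulr0.
Qed.
Lemma sum_delta K (X : 'M[R]_(K, d)) (k j j' : 'I_d) (i : 'I_K) :
  \sum_j0 X i j0 * delta_mx k j j0 j' = if j' == j then X i k else 0.
Proof. by rewrite -mul_delta mxE. Qed.

Lemma sum_deltaS K (X : 'M[R]_(K, d)) a (k j j' : 'I_d) (i : 'I_K) :
  \sum_j0 X i j0 * (a *: delta_mx k j) j0 j' = if j' == j then a * X i k else 0.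
Proof.
have -> : \sum_j0 X i j0 * (a *: delta_mx k j) j0 j' =
  a * \sum_j0 X i j0 * delta_mx k j j0 j'.
  by rewrite mulr_sumr; apply: eq_bigr => l _; rewrite mxE mulrCA.
by rewrite sum_delta; case: eqP; rewrite ?mulr0.
Qed.
End H.

Theorem lemmaC2 (R : realType) (K d : nat) (hK : (0 < K)%N) (delta : R)
  (C1 C2 D1 D2 Bg Bl : 'I_d) (hD : D1 != D2) :
  let r1 := Ordinal hK in
  exists L : layer R d,
    forall (X : 'M[R]_(K, d)) (A : 'M[R]_K),
      global_col r1 X Bg -> local_col r1 X Bl ->
      scalar_col r1 X C1 -> scalar_col r1 X C2 ->
      scalar_col r1 X D1 -> scalar_col r1 X D2 ->
      (exists theta : R, 0 <= theta <= pi / 2 /\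
          X r1 C1 = sin theta /\ X r1 C2 = cos theta) ->
      let Y := apply_layer L X A in
      [/\ Y r1 D1 = sin (asin (X r1 C1) + delta),
          Y r1 D2 = cos (acos (X r1 C2) + delta) &
          forall (i : 'I_K) (j : 'I_d),
            ~ (i = r1 /\ j = D1) -> ~ (i = r1 /\ j = D2) -> Y i j = X i j].
Proof.
move=> r1.
pose W : 'M[R]_d := cos delta *: delta_mx C1 D1 + sin delta *: delta_mx C2 D1
  - delta_mx D1 D1 + (cos delta *: delta_mx C2 D2 - sin delta *: delta_mx C1 D2
  - delta_mx D2 D2).
exists (Layer [::] [::] [::] (@linmlp R d W)).
move=> X A _ _ h1 h2 h3 h4 [th [/andP [th0 th1] [e1 e2]]] Y.
have YE : forall i j, Y i j =
   (if j == D1 then cos delta * X i C1 + sin delta * X i C2 - X i D1 else 0)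
 + (if j == D2 then cos delta * X i C2 - sin delta * X i C1 - X i D2 else 0)
 + X i j.
  move=> i j; rewrite /Y /apply_layer /f_attn /= !big_nil !add0r linmlpE mxE.
  congr (_ + _).
  rewrite /W !(mulmxDr, mulmxN, mulmxBr, (scalemxAr)) !mxE !sum_deltaS !sum_delta.
  by case: (j == D1); case: (j == D2); rewrite ?mulr0 ?oppr0 ?addr0 ?subr0.
have pi2 : 0 <= pi / 2 :> R by rewrite divr_ge0 ?pi_ge0.
have hs : asin (X r1 C1) = th.
  rewrite e1 sinK // in_itv /= th1 andbT.
  by apply: le_trans th0; rewrite oppr_le0.
have hc : acos (X r1 C2) = th.
  rewrite e2 cosK // in_itv /= th0 /=.
  apply: (le_trans th1); rewrite ler_pdivrMr ?ltr0n // ler_peMr ?pi_ge0 //.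
  by rewrite ler1n.
split.
- rewrite YE eqxx (negbTE hD) hs sinD -e1 -e2. 
  by rewrite addr0 subrK; congr (_ + _); exact: mulrC.
- rewrite YE eq_sym (negbTE hD) eqxx hc cosD -e1 -e2 add0r subrK.
  by rewrite mulrC [sin delta * _]mulrC.
- move=> i j n1 n2; rewrite YE.
  have [ei|ni] := eqVneq i r1.
    have -> : (j == D1) = false by apply/eqP => ej; apply: n1.
    have -> : (j == D2) = false by apply/eqP => ej; apply: n2.
    by rewrite !add0r.
  rewrite (h1 i ni) (h2 i ni) (h3 i ni) (h4 i ni) !mulr0 !subr0. by rewrite addr0 !if_same !add0r.
Qed.
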